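(* Let $\mathbb{A}\in\mathbb{C}^{n\times n}$, $\mathbf{f}_1\in\mathbb{C}^n$, $\mathbf{f}_{i+1}=\mathbb{A}\mathbf{f}_i$ for $i=1,\dots,m$, and assume $\mathbf{X}_m=(\mathbf{f}_1,\dots,\mathbf{f}_m)$ has full column rank. Let $C_m$ be the companion matrix (ones on the first subdiagonal, last column $\mathbf{X}_m^\dagger\mathbf{f}_{m+1}$, zeros elsewhere), assume its eigenvalues $\lambda_1,\dots,\lambda_m$ are pairwise distinct, and let $\mathbb{V}_m=(\lambda_i^{j-1})_{i,j=1}^m$. Let $\mathbf{X}_m=U_m\Sigma_m\Phi_m^*$ be a thin SVD ($U_m\in\mathbb{C}^{n\times m}$ with orthonormal columns, $\Sigma_m$ positive diagonal, $\Phi_m$ unitary), let $S_m=U_m^*\mathbb{A}U_m$, and let $B_m=(b_1,\dots,b_m)$ with $S_mb_j=\lambda_jb_j$, $\|b_j\|_2=1$; set $Z_m=U_mB_m$. Then for each $j=1,\dots,m$, $$\mathfrak{a}_j:=\|\mathbf{X}_m\mathbb{V}_m^{-1}\mathbf{e}_j\|_2=\big|(Z_m^\dagger\mathbf{X}_m(:,1))_j\big|,$$ where $\mathbf{e}_j$ is the $j$-th canonical basis vector and $\mathbf{X}_m(:,1)=\mathbf{f}_1$.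
   Context: $\mathbf{X}_m^\dagger$, $Z_m^\dagger$ denote Moore–Penrose pseudoinverses. The matrix $Z_m$ is the matrix of DMD (Ritz) vectors produced by Schmid's DMD without truncation; $S_m$ equals $U_m^*(\mathbb{A}\mathbf{X}_m)\Phi_m\Sigma_m^{-1}$. *)

(* Defs.v *)
From HB Require Import structures.
From mathcomp Require Import all_boot all_order all_algebra.
Set Implicit Arguments. Unset Strict Implicit. Unset Printing Implicit Defensive.
Import Order.TTheory GRing.Theory Num.Theory.
Local Open Scope ring_scope.

Definition ctrmx (C : numClosedFieldType) (p q : nat) (A : 'M[C]_(p, q)) : 'M[C]_(q, p) :=
  (map_mx Num.conj A)^T.

Definition vnorm2 (C : numClosedFieldType) (k : nat) (v : 'cV[C]_k) : C :=
  sqrtC (\sum_(i < k) `|v i 0| ^+ 2).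

Definition is_MPinv (C : numClosedFieldType) (p q : nat)
    (A : 'M[C]_(p, q)) (P : 'M[C]_(q, p)) : Prop :=
  [/\ A *m P *m A = A, P *m A *m P = P,
      ctrmx (A *m P) = A *m P & ctrmx (P *m A) = P *m A].

Definition companion (C : numClosedFieldType) (m : nat) (c : 'cV[C]_m) : 'M[C]_m :=
  \matrix_(i < m, j < m)
     (if (i : nat) == j.+1 then 1 else if (j : nat) == m.-1 then c i 0 else 0).

Definition vandermonde (C : numClosedFieldType) (m : nat) (lam : 'I_m -> C) : 'M[C]_m :=
  \matrix_(i < m, j < m) lam i ^+ j.

(* Main.v *)
Require Import Defs.
From HB Require Import structures.
From mathcomp Require Import all_boot all_order all_algebra.
From mathcomp Require Import zify.
Import Order.TTheory GRing.Theory Num.Theory.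
Local Open Scope ring_scope.
Set Implicit Arguments. Unset Strict Implicit.

Lemma companion_mul (C : numClosedFieldType) (p m' : nat) (c : 'cV[C]_(m'.+1)) (M : 'M[C]_(p, m'.+1)) :
  M *m companion c = \matrix_(a, k) if (k : nat) == m' then (M *m c) a 0 else M a (inord k.+1).
Proof.
apply/matrixP => a k; rewrite !mxE.
case: eqP => [km|kn].
  apply: eq_bigr => l _; rewrite !mxE km /= eqxx.
  by rewrite ifN // neq_ltn ltn_ord.
have hk : (k.+1 < m'.+1)%N by have := ltn_ord k; lia.
rewrite (bigD1 (inord k.+1)) //= big1 ?addr0.
  by rewrite !mxE inordK // eqxx mulr1.
move=> l hl; rewrite !mxE ifN ?ifN ?mulr0 //; first by apply/eqP.
apply: contra hl => /eqP hl; apply/eqP/val_inj; rewrite /= inordK //.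
Qed.

Lemma companion_eig (C : numClosedFieldType) (m' : nat) (c : 'cV[C]_(m'.+1)) (a : C) :
  eigenvalue (companion c) a ->
  (\row_(k < m'.+1) a ^+ k) *m companion c = a *: (\row_(k < m'.+1) a ^+ k).
Proof.
case/eigenvalueP => v hv v0.
have hk : forall k, (k <= m')%N -> v 0 (inord k) = a ^+ k * v 0 0.
  elim=> [|k IH] hk; first by rewrite expr0 mul1r; congr (v 0 _); apply/val_inj; rewrite /= inordK.
  have := congr1 (fun M : 'M[C]_(1, m'.+1) => M 0 (inord k)) hv; rewrite companion_mul !mxE inordK; last by lia.
  rewrite ifN; last by apply/eqP; lia.
  by move=> ->; rewrite IH ?exprS ?mulrA //; lia.
have vE : v = v 0 0 *: \row_(k < m'.+1) a ^+ k.
  apply/matrixP => i k; rewrite !mxE (ord1 i) mulrC -hk; last by have := ltn_ord k; lia.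
  by congr (v 0 _); apply/val_inj; rewrite /= inordK.
have h0 : v 0 0 != 0 by apply: contra v0 => /eqP h; rewrite vE h scale0r.
set r := \row_(k < m'.+1) a ^+ k in vE *.
have : v 0 0 *: (r *m companion c) = v 0 0 *: (a *: r).
  by rewrite scalemxAl -vE hv {1}vE scalerA mulrC -scalerA.
by move/(congr1 (fun M : 'M[C]_(1, m'.+1) => (v 0 0)^-1 *: M)); rewrite !scalerA mulVf // !scale1r mul1r.
Qed.

Lemma vandermonde_unit (C : numClosedFieldType) (m : nat) (lam : 'I_m -> C) :
  injective lam -> vandermonde lam \in unitmx.
Proof.
move=> inj.
have -> : vandermonde lam = (Vandermonde m (\row_i lam i))^T.
  by apply/matrixP => i j; rewrite !mxE.
rewrite unitmxE det_tr det_Vandermonde unitfE prodf_seq_neq0.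
apply/allP => i _ /=; rewrite prodf_seq_neq0; apply/allP => k _ /=.
apply/implyP => ik; rewrite !mxE subr_eq0; apply/eqP => /inj h.
by move: ik; rewrite h ltnn.
Qed.

Section H.
Variable C : numClosedFieldType.

Lemma ctrmxM (p q r : nat) (M : 'M[C]_(p,q)) (N : 'M[C]_(q,r)) :
  ctrmx (M *m N) = ctrmx N *m ctrmx M.
Proof. by rewrite /ctrmx map_mxM trmx_mul. Qed.

Lemma ctrmxK (p q : nat) (M : 'M[C]_(p,q)) : ctrmx (ctrmx M) = M.
Proof. by apply/matrixP => i j; rewrite /ctrmx !mxE conjCK. Qed.

Lemma vnorm2E k (v : 'cV[C]_k) : vnorm2 v = sqrtC ((ctrmx v *m v) 0 0).
Proof.
rewrite /vnorm2 mxE; congr sqrtC; apply: eq_bigr => i _.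
by rewrite /ctrmx !mxE normCK mulrC.
Qed.

Lemma vnorm2Z k (a : C) (v : 'cV[C]_k) :
  vnorm2 (a *: v) = `|a| * vnorm2 v.
Proof.
rewrite /vnorm2.
have -> : \sum_(i < k) `|(a *: v) i 0| ^+ 2 = `|a| ^+ 2 * \sum_(i < k) `|v i 0| ^+ 2.
  by rewrite mulr_sumr; apply: eq_bigr => i _; rewrite mxE normrM exprMn.
rewrite sqrtCM ?sqrCK ?qualifE /= ?exprn_ge0 ?sumr_ge0 // => i _; exact: exprn_ge0.
Qed.
End H.

Lemma diag_eigvec (C : numClosedFieldType) (m : nat) (lam : 'I_m -> C) (u : 'cV[C]_m) (k : 'I_m) :
  injective lam -> diag_mx (\row_i lam i) *m u = lam k *: u -> u = u k 0 *: delta_mx k 0.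
Proof.
move=> inj h; apply/matrixP => i z; rewrite (ord1 z) !mxE.
have := congr1 (fun M : 'cV[C]_m => M i 0) h; rewrite mul_diag_mx !mxE => e.
case: (eqVneq i k) => [->|ik]; first by rewrite eqxx mulr1.
rewrite mulr0.
apply/eqP; move/eqP: e; rewrite -subr_eq0 -mulrBl mulf_eq0 subr_eq0.
by case/orP => [/eqP/inj ek|//]; rewrite ek eqxx in ik.
Qed.

Lemma diag_mul1 (C : numClosedFieldType) (m : nat) (a b : 'rV[C]_m) :
  (forall k, a 0 k * b 0 k = 1) -> diag_mx a *m diag_mx b = 1%:M.
Proof.
move=> h; apply/matrixP => i k; rewrite mul_diag_mx !mxE.
case: (eqVneq i k) => [->|ik]; first by rewrite !mulr1n h.
by rewrite !mulr0n mulr0.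
Qed.

Lemma col_mulmx (C : numClosedFieldType) (p q r : nat) (M : 'M[C]_(p, q)) (N : 'M[C]_(q, r)) k :
  col k (M *m N) = M *m col k N.
Proof. by rewrite !colE mulmxA. Qed.

Lemma col_ext (C : numClosedFieldType) (p q : nat) (M N : 'M[C]_(p, q)) :
  (forall k, col k M = col k N) -> M = N.
Proof.
move=> h; apply/matrixP => i k.
by have := congr1 (fun Q : 'cV[C]_p => Q i 0) (h k); rewrite !mxE.
Qed.

Unset Implicit Arguments.
Theorem proposition2p3 (C : numClosedFieldType) (n m : nat)
  (A : 'M[C]_n) (f : nat -> 'cV[C]_n)
  (hf : forall i : nat, (i < m)%N -> f i.+1 = A *m f i)
  (Xp : 'M[C]_(m, n))
  (hXp : is_MPinv (\matrix_(i < n, j < m) f j i 0) Xp)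
  (hrank : \rank (\matrix_(i < n, j < m) f j i 0) = m)
  (lam : 'I_m -> C) (hlam_inj : injective lam)
  (hlam_eig : forall i, eigenvalue (companion (Xp *m f m)) (lam i))
  (U : 'M[C]_(n, m)) (sigma : 'rV[C]_m) (Phi : 'M[C]_m)
  (hU : ctrmx U *m U = 1%:M)
  (hsigma : forall j, 0 < sigma 0 j)
  (hPhi : ctrmx Phi *m Phi = 1%:M)
  (hsvd : \matrix_(i < n, j < m) f j i 0 = U *m diag_mx sigma *m ctrmx Phi)
  (B : 'M[C]_m)
  (hB_eig : forall j, (ctrmx U *m A *m U) *m col j B = lam j *: col j B)
  (hB_norm : forall j, vnorm2 (col j B) = 1)
  (Zp : 'M[C]_(m, n))
  (hZp : is_MPinv (U *m B) Zp) :
  forall j : 'I_m,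
    vnorm2 ((\matrix_(i < n, k < m) f k i 0) *m invmx (vandermonde lam) *m delta_mx j 0)
    = `| (Zp *m f 0%N) j 0 |.
Proof.
destruct m as [|m']; first by case.
move=> j.
set X := \matrix_(i < n, j < m'.+1) f j i 0 in hXp hrank hsvd *.
set V := vandermonde lam. set W := invmx V.
set c := Xp *m f m'.+1 in hlam_eig. set Cm := companion c in hlam_eig.
have uV : V \in unitmx := vandermonde_unit hlam_inj.
have WV : W *m V = 1%:M by rewrite mulVmx.
have VW : V *m W = 1%:M by rewrite mulmxV.
set lr := \row_(i < m'.+1) lam i.
have VC : V *m Cm = diag_mx lr *m V.
  apply/matrixP => i k.
  have := congr1 (fun M : 'M[C]_(1, m'.+1) => M 0 k) (companion_eig (hlam_eig i)).
  rewrite mul_diag_mx !mxE => <-.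
  by apply: eq_bigr => l _; rewrite !mxE.
set Ut := ctrmx U.
have hXXp : Ut *m X *m Xp = Ut.
  set Sinv := diag_mx (\row_(k < m'.+1) (sigma 0 k)^-1).
  have SS : diag_mx sigma *m Sinv = 1%:M.
    by apply: diag_mul1 => k; rewrite mxE divff // lt0r_neq0.
  have hU' : U = X *m (Phi *m Sinv).
    by rewrite hsvd !mulmxA -(mulmxA _ (ctrmx Phi)) hPhi mulmx1 -mulmxA SS mulmx1.
  case: hXp => h1 h2 h3 h4.
  by rewrite /Ut hU' ctrmxM -!mulmxA -h3 -(ctrmxM (X *m Xp) X) h1.
have hUUX : U *m Ut *m X = X.
  by rewrite {2}hsvd hsvd /Ut !mulmxA -(mulmxA U (ctrmx U) U) hU mulmx1.
have AX : A *m X = \matrix_(a < n, k < m'.+1) f k.+1 a 0.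
  apply/matrixP => a k; rewrite !mxE hf // mxE; by apply: eq_bigr => b _; rewrite mxE.
have hc : Ut *m (X *m c) = Ut *m f m'.+1 by rewrite /c !mulmxA hXXp.
have hSX : Ut *m A *m X = Ut *m X *m Cm.
  rewrite -!mulmxA AX /Cm companion_mul; apply/matrixP => a k; rewrite !mxE.
  case: (eqVneq (k : nat) m') => [km|kn].
    transitivity ((Ut *m f m'.+1) a 0).
      by rewrite mxE; apply: eq_bigr => b _; rewrite !mxE km.
    by rewrite -hc mxE; apply: eq_bigr => b _; rewrite [in RHS]mxE km eqxx.
  apply: eq_bigr => b _; rewrite !mxE (negbTE kn) inordK //; have := ltn_ord k; lia.
have hCW : Cm *m W = W *m diag_mx lr.
  by rewrite -[Cm]mul1mx -WV -(mulmxA W V Cm) VC -!mulmxA VW mulmx1.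
set P := Ut *m X *m W.
have SP : Ut *m A *m U *m P = P *m diag_mx lr.
  transitivity (Ut *m A *m (U *m Ut *m X) *m W); first by rewrite /P !mulmxA.
  by rewrite hUUX hSX -mulmxA hCW mulmxA.
have uUX : Ut *m X \in unitmx.
  have -> : Ut *m X = diag_mx sigma *m ctrmx Phi by rewrite hsvd !mulmxA hU mul1mx.
  rewrite unitmx_mul; apply/andP; split; last by case: (mulmx1_unit hPhi).
  rewrite unitmxE det_diag unitfE prodf_seq_neq0; apply/allP => i _ /=.
  exact: lt0r_neq0.
have uP : P \in unitmx by rewrite unitmx_mul uUX unitmx_inv uV.
have SE : Ut *m A *m U = P *m diag_mx lr *m invmx P by rewrite -SP mulmxK.
pose d k := (invmx P *m col k B) k 0.
have colB : forall k, col k B = d k *: col k P.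
  move=> k.
  have hu : diag_mx lr *m (invmx P *m col k B) = lam k *: (invmx P *m col k B).
    transitivity (invmx P *m (P *m diag_mx lr *m invmx P *m col k B)).
      by rewrite -(mulmxA (P *m diag_mx lr)) -(mulmxA P) mulKmx.
    have hb := hB_eig k; rewrite -/Ut SE in hb.
    by rewrite hb scalemxAr.
  have ue := diag_eigvec hlam_inj hu.
  by rewrite -[col k B](mulKVmx uP) ue -scalemxAr -colE.
have d0 : forall k, d k != 0.
  move=> k; apply/eqP => h; have := hB_norm k.
  by rewrite colB h vnorm2Z normr0 mul0r => /eqP; rewrite eq_sym oner_eq0.
set D := diag_mx (\row_k d k). set Dinv := diag_mx (\row_k (d k)^-1).
have DDi : D *m Dinv = 1%:M by apply: diag_mul1 => k; rewrite !mxE divff.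
have DiD : Dinv *m D = 1%:M by apply: diag_mul1 => k; rewrite !mxE mulVf.
have BPD : B = P *m D.
  apply: col_ext => k; rewrite col_mulmx colB.
  have -> : col k D = d k *: delta_mx k 0.
    apply/matrixP => a z; rewrite (ord1 z) !mxE andbT.
    by case: (eqVneq a k) => [->|ak]; rewrite ?mulr1n ?mulr1 ?mulr0n ?mulr0.
  by rewrite -scalemxAr -colE.
have hZ : U *m B = X *m W *m D by rewrite BPD /P !mulmxA hUUX.
have hZZ : Zp *m (X *m W *m D) = 1%:M.
  case: hZp => z1 _ _ _; rewrite hZ in z1.
  set L := Dinv *m V *m (invmx (Ut *m X) *m Ut).
  have LZ : L *m (X *m W *m D) = 1%:M.
    transitivity (Dinv *m V *m (invmx (Ut *m X) *m (Ut *m X)) *m W *m D); first by rewrite /L !mulmxA.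
    by rewrite mulVmx // mulmx1 -(mulmxA Dinv V W) VW mulmx1 DiD.
  set Z := X *m W *m D in z1 LZ *.
  transitivity ((L *m Z) *m (Zp *m Z)); first by rewrite LZ mul1mx.
  by rewrite -mulmxA (mulmxA Z) z1 LZ.
have hZX : Zp *m X = Dinv *m V.
  transitivity (Zp *m (X *m W *m D) *m (Dinv *m V)); last by rewrite hZZ mul1mx.
  by rewrite !mulmxA -(mulmxA _ D Dinv) DDi mulmx1 -(mulmxA _ W V) WV mulmx1.
have f0 : f 0%N = X *m delta_mx 0 0.
  by rewrite -colE; apply/matrixP => a z; rewrite (ord1 z) !mxE.
rewrite f0 mulmxA hZX -[Dinv *m V *m _]colE mxE mul_diag_mx !mxE expr0 mulr1.
rewrite -colE; set y := col j (X *m W).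
have yE : y = X *m col j W by rewrite /y col_mulmx.
have hy : col j B = d j *: (Ut *m y) by rewrite colB /P -mulmxA col_mulmx -/y.
have hUy : U *m Ut *m y = y by rewrite yE mulmxA hUUX.
have ny : vnorm2 (Ut *m y) = vnorm2 y.
  by rewrite !vnorm2E ctrmxM /Ut ctrmxK -mulmxA (mulmxA U) hUy.
have h1 := hB_norm j; rewrite hy vnorm2Z ny in h1.
have nd : `|d j| != 0 by rewrite normr_eq0.
by rewrite normfV -(mulKf nd (vnorm2 y)) h1 mulr1.
Qed.
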